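(* Let $A$ be a locally-complex Cayley--Dickson algebra and let $f(x)=x^n+a_{n-1}x^{n-1}+\dots+a_0\in A[x]$ be monic with $n\ge1$. Then $\mathrm{sn}(f)$ is a compact subset of $A$, and it is contained in the open ball centered at $0$ of radius $R_1(f)$, in the open ball centered at $0$ of radius $R_2(f)$, and in the closed ball centered at $0$ of radius $R_3(f)$, where $R_1(f)=\sqrt{1+\sum_{k=0}^{n-1}|a_k|^2}$, $R_2(f)=1+\max_{0\le k\le n-1}|a_k|$, $R_3(f)=\max\{1,\sum_{k=0}^{n-1}|a_k|\}$.
   Context: Real Cayley--Dickson algebras: $A_0=\mathbb{R}$ with identity involution, $A_{k+1}=A_k\{\gamma_k\}=A_k\times A_k$ with product $(a,b)(c,d)=(ac+\gamma_k\bar d b,\ da+b\bar c)$ and involution $\overline{(a,b)}=(\bar a,-b)$. A real unital algebra is locally-complex if every non-real element generates a subalgebra isomorphic to $\mathbb{C}$ (for Cayley--Dickson algebras: all $\gamma_k=-1$ up to isomorphism). Trace $\mathrm{tr}(\lambda)=\lambda+\bar\lambda$, norm $\mathrm{n}(\lambda)=\bar\lambda\lambda$, $|\lambda|=\sqrt{\mathrm{n}(\lambda)}$ (Euclidean norm; $A$ carries the Euclidean topology). For $I$ with trace $0$ and norm $1$, $\mathbb{C}_I=\mathbb{R}+\mathbb{R}I\cong\mathbb{C}$ and $\pi_I$ the orthogonal projection onto it. $A[x]=A\otimes_{\mathbb{R}}\mathbb{R}[x]$ with central $x$; for $f(x)=\sum_k a_kx^k$, $f_I(x)=\sum_k\pi_I(a_k)x^k$.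 If $f_I$ is non-constant, $K_{\mathbb{C}_I}(f_I)$ is the convex hull in $\mathbb{C}_I$ of the roots of $f_I$ in $\mathbb{C}_I$; otherwise $K_{\mathbb{C}_I}(f_I)=\mathbb{C}_I$. The Gauss--Lucas snail is $\mathrm{sn}(f)=\bigcup_I K_{\mathbb{C}_I}(f_I)$ over all $I$ with $\mathrm{tr}(I)=0$, $\mathrm{n}(I)=1$. *)

(* Defs.v *)
From Stdlib Require Import Reals List.
Open Scope R_scope.

(** * Real Cayley--Dickson algebras A_k with all gamma_j = -1
    (the locally-complex ones, up to isomorphism).
    A_0 = R, A_{k+1} = A_k x A_k,
    (a,b)(c,d) = (ac + gamma conj(d) b, da + b conj(c)) with gamma = -1,
    conj(a,b) = (conj(a), -b). *)

Fixpoint CD (k : nat) : Type :=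
  match k with O => R | S k' => (CD k' * CD k')%type end.

Fixpoint cd_zero (k : nat) : CD k :=
  match k return CD k with O => 0 | S k' => (cd_zero k', cd_zero k') end.

Fixpoint cd_real (k : nat) (r : R) : CD k :=
  match k return CD k with O => r | S k' => (cd_real k' r, cd_zero k') end.

Fixpoint cd_add (k : nat) : CD k -> CD k -> CD k :=
  match k return CD k -> CD k -> CD k with
  | O => Rplus
  | S k' => fun x y => (cd_add k' (fst x) (fst y), cd_add k' (snd x) (snd y))
  end.

Fixpoint cd_opp (k : nat) : CD k -> CD k :=
  match k return CD k -> CD k with
  | O => Ropp
  | S k' => fun x => (cd_opp k' (fst x), cd_opp k' (snd x))
  end.

Definition cd_sub (k : nat) (x y : CD k) : CD k := cd_add k x (cd_opp k y).

Fixpoint cd_conj (k : nat) : CD k -> CD k :=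
  match k return CD k -> CD k with
  | O => fun x => x
  | S k' => fun x => (cd_conj k' (fst x), cd_opp k' (snd x))
  end.

Fixpoint cd_scal (k : nat) (r : R) : CD k -> CD k :=
  match k return CD k -> CD k with
  | O => fun x => r * x
  | S k' => fun x => (cd_scal k' r (fst x), cd_scal k' r (snd x))
  end.

Fixpoint cd_mul (k : nat) : CD k -> CD k -> CD k :=
  match k return CD k -> CD k -> CD k with
  | O => Rmult
  | S k' => fun x y =>
      (cd_add k' (cd_mul k' (fst x) (fst y))
                 (cd_opp k' (cd_mul k' (cd_conj k' (snd y)) (snd x))),
       cd_add k' (cd_mul k' (snd y) (fst x))
                 (cd_mul k' (snd x) (cd_conj k' (fst y))))
  end.

Fixpoint cd_re (k : nat) : CD k -> R :=
  match k return CD k -> R with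
  | O => fun x => x
  | S k' => fun x => cd_re k' (fst x)
  end.

Definition cd_tr (k : nat) (x : CD k) : CD k := cd_add k x (cd_conj k x).
Definition cd_n (k : nat) (x : CD k) : CD k := cd_mul k (cd_conj k x) x.

(** |x| = sqrt(n(x)) (n(x) is real, we take its real part) *)
Definition cd_abs (k : nat) (x : CD k) : R := sqrt (cd_re k (cd_n k x)).

(** Euclidean inner product: the polarization of the quadratic form n *)
Definition cd_dot (k : nat) (x y : CD k) : R :=
  (cd_re k (cd_n k (cd_add k x y)) - cd_re k (cd_n k x) - cd_re k (cd_n k y)) / 2.

Fixpoint cd_pow (k : nat) (x : CD k) (m : nat) : CD k :=
  match m with O => cd_real k 1 | S m' => cd_mul k (cd_pow k x m') x end.

Definition imag_unit (k : nat) (I : CD k) : Prop :=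
  cd_tr k I = cd_zero k /\ cd_n k I = cd_real k 1.

Definition in_CI (k : nat) (I z : CD k) : Prop :=
  exists al be : R, z = cd_add k (cd_real k al) (cd_scal k be I).

(** orthogonal projection onto C_I; for an imaginary unit I, {1, I} is an
    orthonormal basis of C_I, so pi_I(a) = <a,1> 1 + <a,I> I *)
Definition pi_I (k : nat) (I a : CD k) : CD k :=
  cd_add k (cd_real k (cd_dot k a (cd_real k 1))) (cd_scal k (cd_dot k a I) I).

(** Polynomials in A[x] are represented by coefficient lists
    c = [c_0; c_1; ...; c_d], f(x) = sum_i c_i x^i (x central). *)

Fixpoint eval_fI_from (k : nat) (I : CD k) (c : list (CD k)) (z : CD k) (i : nat)
  : CD k :=
  match c with
  | nil => cd_zero k
  | a :: c' => cd_add k (cd_mul k (pi_I k I a) (cd_pow k z i))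
                        (eval_fI_from k I c' z (S i))
  end.

Definition eval_fI (k : nat) (I : CD k) (c : list (CD k)) (z : CD k) : CD k :=
  eval_fI_from k I c z 0.

Definition fI_nonconstant (k : nat) (I : CD k) (c : list (CD k)) : Prop :=
  exists i : nat, (1 <= i)%nat /\ (i < length c)%nat /\
    pi_I k I (nth i c (cd_zero k)) <> cd_zero k.

Definition conv_hull (k : nat) (S : CD k -> Prop) (x : CD k) : Prop :=
  exists l : list (R * CD k),
    Forall (fun p => 0 <= fst p /\ S (snd p)) l /\
    fold_right Rplus 0 (map fst l) = 1 /\
    x = fold_right (fun p acc => cd_add k (cd_scal k (fst p) (snd p)) acc)
                   (cd_zero k) l.

Definition K_I (k : nat) (I : CD k) (c : list (CD k)) (x : CD k) : Prop :=
  (fI_nonconstant k I c /\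
     conv_hull k (fun z => in_CI k I z /\ eval_fI k I c z = cd_zero k) x)
  \/ (~ fI_nonconstant k I c /\ in_CI k I x).

Definition snail (k : nat) (c : list (CD k)) (x : CD k) : Prop :=
  exists I : CD k, imag_unit k I /\ K_I k I c x.

Definition cd_open (k : nat) (U : CD k -> Prop) : Prop :=
  forall x, U x -> exists e, 0 < e /\
    forall y, cd_abs k (cd_sub k y x) < e -> U y.

Definition cd_compact (k : nat) (S : CD k -> Prop) : Prop :=
  forall (J : Type) (U : J -> CD k -> Prop),
    (forall j, cd_open k (U j)) ->
    (forall x, S x -> exists j, U j x) ->
    exists l : list J, forall x, S x -> exists j, In j l /\ U j x.

Definition monic_poly (k n : nat) (a : nat -> CD k) : list (CD k) :=
  map a (seq 0 n) ++ (cd_real k 1 :: nil).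

Definition radius1 (k n : nat) (a : nat -> CD k) : R :=
  sqrt (1 + fold_right Rplus 0 (map (fun j => (cd_abs k (a j))^2) (seq 0 n))).

Definition radius2 (k n : nat) (a : nat -> CD k) : R :=
  1 + fold_right Rmax 0 (map (fun j => cd_abs k (a j)) (seq 0 n)).

Definition radius3 (k n : nat) (a : nat -> CD k) : R :=
  Rmax 1 (fold_right Rplus 0 (map (fun j => cd_abs k (a j)) (seq 0 n))).

(* Main.v *)
Require Import Defs.
From Stdlib Require Import Reals List Lra Psatz.
Open Scope R_scope.

Module CDA.

Fixpoint sq (k : nat) : CD k -> R :=
  match k return CD k -> R with
  | O => fun x => x * x
  | S k' => fun x => sq k' (fst x) + sq k' (snd x)
  end.

Fixpoint dt (k : nat) : CD k -> CD k -> R :=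
  match k return CD k -> CD k -> R with
  | O => fun x y => x * y
  | S k' => fun x y => dt k' (fst x) (fst y) + dt k' (snd x) (snd y)
  end.

Definition phi (k : nat) (I : CD k) (a b : R) : CD k :=
  cd_add k (cd_real k a) (cd_scal k b I).

Section L.
Variable k : nat.
End L.

Ltac indk k := induction k as [|k IHk]; simpl; intros.

Lemma add_comm k (x y : CD k) : cd_add k x y = cd_add k y x.
Proof. revert x y; indk k; [lra| destruct x, y; simpl; f_equal; auto]. Qed.

Lemma add_assoc k (x y z : CD k) : cd_add k (cd_add k x y) z = cd_add k x (cd_add k y z).
Proof. revert x y z; indk k; [lra| destruct x, y, z; simpl; f_equal; auto]. Qed.

Lemma add_zero_l k (x : CD k) : cd_add k (cd_zero k) x = x.
Proof. revert x; indk k; [lra| destruct x; simpl; f_equal; auto]. Qed.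

Lemma add_zero_r k (x : CD k) : cd_add k x (cd_zero k) = x.
Proof. rewrite add_comm; apply add_zero_l. Qed.

Lemma add_opp_r k (x : CD k) : cd_add k x (cd_opp k x) = cd_zero k.
Proof. revert x; indk k; [lra| destruct x; simpl; f_equal; auto]. Qed.

Lemma opp_opp k (x : CD k) : cd_opp k (cd_opp k x) = x.
Proof. revert x; indk k; [lra| destruct x; simpl; f_equal; auto]. Qed.

Lemma opp_add k (x y : CD k) : cd_opp k (cd_add k x y) = cd_add k (cd_opp k x) (cd_opp k y).
Proof. revert x y; indk k; [lra| destruct x, y; simpl; f_equal; auto]. Qed.

Lemma opp_zero k : cd_opp k (cd_zero k) = cd_zero k.
Proof. indk k; [lra| f_equal; auto]. Qed.

Lemma scal_add_r k r (x y : CD k) : cd_scal k r (cd_add k x y) = cd_add k (cd_scal k r x) (cd_scal k r y).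
Proof. revert x y; indk k; [lra| destruct x, y; simpl; f_equal; auto]. Qed.

Lemma scal_add_l k r s (x : CD k) : cd_scal k (r + s) x = cd_add k (cd_scal k r x) (cd_scal k s x).
Proof. revert x; indk k; [lra| destruct x; simpl; f_equal; auto]. Qed.

Lemma scal_scal k r s (x : CD k) : cd_scal k r (cd_scal k s x) = cd_scal k (r * s) x.
Proof. revert x; indk k; [lra| destruct x; simpl; f_equal; auto]. Qed.

Lemma scal_one k (x : CD k) : cd_scal k 1 x = x.
Proof. revert x; indk k; [lra| destruct x; simpl; f_equal; auto]. Qed.

Lemma scal_zero_l k (x : CD k) : cd_scal k 0 x = cd_zero k.
Proof. revert x; indk k; [lra| destruct x; simpl; f_equal; auto]. Qed.

Lemma scal_zero_r k r : cd_scal k r (cd_zero k) = cd_zero k.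
Proof. indk k; [lra| f_equal; auto]. Qed.

Lemma scal_opp k r (x : CD k) : cd_scal k r (cd_opp k x) = cd_opp k (cd_scal k r x).
Proof. revert x; indk k; [lra| destruct x; simpl; f_equal; auto]. Qed.

Lemma opp_scal k (x : CD k) : cd_opp k x = cd_scal k (-1) x.
Proof. revert x; indk k; [lra| destruct x; simpl; f_equal; auto]. Qed.

Lemma scal_real k r s : cd_scal k r (cd_real k s) = cd_real k (r * s).
Proof. indk k; [lra| f_equal; auto; apply scal_zero_r]. Qed.

Lemma real_add k r s : cd_add k (cd_real k r) (cd_real k s) = cd_real k (r + s).
Proof. indk k; [lra| f_equal; auto; apply add_zero_l]. Qed.

Lemma real_zero k : cd_real k 0 = cd_zero k.
Proof. indk k; [lra| f_equal; auto]. Qed.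

Lemma real_opp k r : cd_opp k (cd_real k r) = cd_real k (- r).
Proof. indk k; [lra| f_equal; auto; apply opp_zero]. Qed.

Lemma conj_conj k (x : CD k) : cd_conj k (cd_conj k x) = x.
Proof. revert x; indk k; [lra| destruct x; simpl; f_equal; auto; apply opp_opp]. Qed.

Lemma conj_add k (x y : CD k) : cd_conj k (cd_add k x y) = cd_add k (cd_conj k x) (cd_conj k y).
Proof. revert x y; indk k; [lra| destruct x, y; simpl; f_equal; auto; apply opp_add]. Qed.

Lemma conj_opp k (x : CD k) : cd_conj k (cd_opp k x) = cd_opp k (cd_conj k x).
Proof. revert x; indk k; [lra| destruct x; simpl; f_equal; auto]. Qed.

Lemma conj_scal k r (x : CD k) : cd_conj k (cd_scal k r x) = cd_scal k r (cd_conj k x).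
Proof. revert x; indk k; [lra| destruct x; simpl; f_equal; auto; symmetry; apply scal_opp]. Qed.

Lemma conj_real k r : cd_conj k (cd_real k r) = cd_real k r.
Proof. indk k; [lra| f_equal; auto; apply opp_zero]. Qed.

Lemma conj_zero k : cd_conj k (cd_zero k) = cd_zero k.
Proof. rewrite <- real_zero; apply conj_real. Qed.

Lemma add_swap4 k (p q r s : CD k) :
  cd_add k (cd_add k p q) (cd_add k r s) = cd_add k (cd_add k p r) (cd_add k q s).
Proof.
  rewrite !add_assoc; f_equal; rewrite <- !add_assoc; f_equal; apply add_comm.
Qed.

Lemma mul_add_lr k :
  (forall x y z : CD k, cd_mul k (cd_add k x y) z = cd_add k (cd_mul k x z) (cd_mul k y z)) /\
  (forall x y z : CD k, cd_mul k z (cd_add k x y) = cd_add k (cd_mul k z x) (cd_mul k z y)).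
Proof.
  indk k; [split; intros; simpl; lra|].
  destruct IHk as [H1 H2]. split; intros [a1 b1] [a2 b2] [c d]; simpl; f_equal.
  - rewrite H1, H2, opp_add; apply add_swap4.
  - rewrite H1, H2; apply add_swap4.
  - rewrite H2, conj_add, H1, opp_add; apply add_swap4.
  - rewrite H1, conj_add, H2; apply add_swap4.
Qed.

Lemma mul_add_l k (x y z : CD k) : cd_mul k (cd_add k x y) z = cd_add k (cd_mul k x z) (cd_mul k y z).
Proof. apply mul_add_lr. Qed.
Lemma mul_add_r k (x y z : CD k) : cd_mul k z (cd_add k x y) = cd_add k (cd_mul k z x) (cd_mul k z y).
Proof. apply mul_add_lr. Qed.

Lemma mul_scal_lr k r :
  (forall x y : CD k, cd_mul k (cd_scal k r x) y = cd_scal k r (cd_mul k x y)) /\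
  (forall x y : CD k, cd_mul k x (cd_scal k r y) = cd_scal k r (cd_mul k x y)).
Proof.
  indk k; [split; intros; simpl; lra|].
  destruct IHk as [H1 H2]. split; intros [a b] [c d]; simpl; f_equal;
    rewrite ?conj_scal, ?H1, ?H2, ?H1, ?scal_add_r, ?scal_opp; reflexivity.
Qed.

Lemma mul_scal_l k r (x y : CD k) : cd_mul k (cd_scal k r x) y = cd_scal k r (cd_mul k x y).
Proof. apply mul_scal_lr. Qed.
Lemma mul_scal_r k r (x y : CD k) : cd_mul k x (cd_scal k r y) = cd_scal k r (cd_mul k x y).
Proof. apply mul_scal_lr. Qed.

Lemma mul_opp_l k (x y : CD k) : cd_mul k (cd_opp k x) y = cd_opp k (cd_mul k x y).
Proof. rewrite !opp_scal; apply mul_scal_l. Qed.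
Lemma mul_opp_r k (x y : CD k) : cd_mul k x (cd_opp k y) = cd_opp k (cd_mul k x y).
Proof. rewrite !opp_scal; apply mul_scal_r. Qed.

Lemma mul_zero_l k (x : CD k) : cd_mul k (cd_zero k) x = cd_zero k.
Proof. rewrite <- (scal_zero_l k (cd_zero k)), mul_scal_l, !scal_zero_l; auto. Qed.
Lemma mul_zero_r k (x : CD k) : cd_mul k x (cd_zero k) = cd_zero k.
Proof. rewrite <- (scal_zero_l k (cd_zero k)), mul_scal_r, !scal_zero_l; auto. Qed.

Lemma mul_real_lr k r :
  (forall x : CD k, cd_mul k (cd_real k r) x = cd_scal k r x) /\
  (forall x : CD k, cd_mul k x (cd_real k r) = cd_scal k r x).
Proof.
  indk k; [split; intros; simpl; lra|].
  destruct IHk as [H1 H2]. split; intros [c d]; simpl; f_equal;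
    rewrite ?conj_real, ?conj_zero, ?H1, ?H2, ?mul_zero_l, ?mul_zero_r, ?opp_zero,
      ?add_zero_r, ?add_zero_l; reflexivity.
Qed.

Lemma mul_real_l k r (x : CD k) : cd_mul k (cd_real k r) x = cd_scal k r x.
Proof. apply mul_real_lr. Qed.
Lemma mul_real_r k r (x : CD k) : cd_mul k x (cd_real k r) = cd_scal k r x.
Proof. apply mul_real_lr. Qed.

Lemma re_add k (x y : CD k) : cd_re k (cd_add k x y) = cd_re k x + cd_re k y.
Proof. revert x y; indk k; [lra| destruct x, y; simpl; auto]. Qed.
Lemma re_opp k (x : CD k) : cd_re k (cd_opp k x) = - cd_re k x.
Proof. revert x; indk k; [lra| destruct x; simpl; auto]. Qed.
Lemma re_scal k r (x : CD k) : cd_re k (cd_scal k r x) = r * cd_re k x.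
Proof. revert x; indk k; [lra| destruct x; simpl; auto]. Qed.
Lemma re_real k r : cd_re k (cd_real k r) = r.
Proof. indk k; auto. Qed.
Lemma re_zero k : cd_re k (cd_zero k) = 0.
Proof. rewrite <- real_zero; apply re_real. Qed.

Lemma dt_sym k (x y : CD k) : dt k x y = dt k y x.
Proof. revert x y; indk k; [lra| destruct x, y; simpl; rewrite IHk, (IHk c0); auto]. Qed.
Lemma sq_dt k (x : CD k) : sq k x = dt k x x.
Proof. revert x; indk k; [lra| destruct x; simpl; rewrite !IHk; auto]. Qed.
Lemma dt_add_l k (x y z : CD k) : dt k (cd_add k x y) z = dt k x z + dt k y z.
Proof. revert x y z; indk k; [lra| destruct x, y, z; simpl; rewrite !IHk; lra]. Qed.
Lemma dt_scal_l k r (x y : CD k) : dt k (cd_scal k r x) y = r * dt k x y.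
Proof. revert x y; indk k; [lra| destruct x, y; simpl; rewrite !IHk; lra]. Qed.
Lemma dt_opp_l k (x y : CD k) : dt k (cd_opp k x) y = - dt k x y.
Proof. rewrite opp_scal, dt_scal_l; lra. Qed.
Lemma dt_add_r k (x y z : CD k) : dt k z (cd_add k x y) = dt k z x + dt k z y.
Proof. rewrite dt_sym, dt_add_l, !(dt_sym k z); auto. Qed.
Lemma dt_scal_r k r (x y : CD k) : dt k y (cd_scal k r x) = r * dt k y x.
Proof. rewrite dt_sym, dt_scal_l, (dt_sym k y); auto. Qed.
Lemma dt_opp_r k (x y : CD k) : dt k y (cd_opp k x) = - dt k y x.
Proof. rewrite dt_sym, dt_opp_l, (dt_sym k y); auto. Qed.
Lemma dt_zero_l k (x : CD k) : dt k (cd_zero k) x = 0.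
Proof. rewrite <- (scal_zero_l k (cd_zero k)), dt_scal_l; lra. Qed.
Lemma dt_real_r k r (x : CD k) : dt k x (cd_real k r) = r * cd_re k x.
Proof. revert x; indk k; [lra| destruct x; simpl; rewrite IHk, dt_sym, dt_zero_l; lra]. Qed.

Lemma sq_nonneg k (x : CD k) : 0 <= sq k x.
Proof. revert x; indk k; [nra| destruct x; simpl; pose proof (IHk c); pose proof (IHk c0); lra]. Qed.

Lemma sq_add k (x y : CD k) : sq k (cd_add k x y) = sq k x + sq k y + 2 * dt k x y.
Proof. rewrite !sq_dt, dt_add_l, !dt_add_r, (dt_sym k y x); lra. Qed.
Lemma sq_scal k r (x : CD k) : sq k (cd_scal k r x) = r * r * sq k x.
Proof. rewrite !sq_dt, dt_scal_l, dt_scal_r; lra. Qed.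
Lemma sq_opp k (x : CD k) : sq k (cd_opp k x) = sq k x.
Proof. rewrite opp_scal, sq_scal; lra. Qed.
Lemma sq_real k r : sq k (cd_real k r) = r * r.
Proof. rewrite sq_dt, dt_real_r, re_real; auto. Qed.

Lemma cd_n_real k (x : CD k) : cd_n k x = cd_real k (sq k x).
Proof.
  unfold cd_n; revert x; indk k; [auto|]. destruct x as [a b]; simpl. f_equal.
  - rewrite IHk, mul_opp_r, IHk, opp_opp, real_add; auto.
  - rewrite mul_opp_l, add_opp_r; auto.
Qed.

Lemma re_n k (x : CD k) : cd_re k (cd_n k x) = sq k x.
Proof. rewrite cd_n_real; apply re_real. Qed.

Lemma cd_tr_real k (x : CD k) : cd_tr k x = cd_real k (2 * cd_re k x).
Proof.
  unfold cd_tr; revert x; indk k; [lra|]. destruct x as [a b]; simpl. f_equal.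
  - apply IHk.
  - apply add_opp_r.
Qed.

Lemma cd_dot_dt k (x y : CD k) : cd_dot k x y = dt k x y.
Proof. unfold cd_dot. rewrite !re_n, sq_add. lra. Qed.

Lemma cd_abs_sq k (x : CD k) : cd_abs k x = sqrt (sq k x).
Proof. unfold cd_abs; rewrite re_n; auto. Qed.

Lemma add_eq_zero k (x y : CD k) : cd_add k x y = cd_zero k -> y = cd_opp k x.
Proof.
  intros H. rewrite <- (add_zero_l k y), <- (add_opp_r k x), (add_comm k x), add_assoc, H, add_zero_r; auto.
Qed.

Lemma real_inj k r s : cd_real k r = cd_real k s -> r = s.
Proof. intros H; rewrite <- (re_real k r), <- (re_real k s), H; auto. Qed.

Record iu (k : nat) (I : CD k) : Prop := {
  iu_re : cd_re k I = 0;
  iu_sq : sq k I = 1;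
  iu_conj : cd_conj k I = cd_opp k I;
  iu_mul : cd_mul k I I = cd_real k (-1) }.

Lemma imag_iu k I : imag_unit k I -> iu k I.
Proof.
  intros [Ht Hn].
  assert (Hre : cd_re k I = 0).
  { rewrite cd_tr_real, <- real_zero in Ht. apply real_inj in Ht. lra. }
  assert (Hsq : sq k I = 1).
  { rewrite cd_n_real in Hn. apply real_inj in Hn. auto. }
  assert (Hc : cd_conj k I = cd_opp k I) by (apply add_eq_zero; exact Ht).
  split; auto.
  unfold cd_n in Hn. rewrite Hc, mul_opp_l in Hn.
  rewrite <- (opp_opp k (cd_mul k I I)), Hn, real_opp; auto.
Qed.

Lemma iu_imag k I : iu k I -> imag_unit k I.
Proof.
  intros [H1 H2 H3 H4]. split.
  - rewrite cd_tr_real, H1, <- real_zero; f_equal; lra.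
  - rewrite cd_n_real, H2; auto.
Qed.

Section Phi.
Variable k : nat.
Variable I : CD k.
Hypothesis HI : iu k I.

Lemma phi_add a b c d : cd_add k (phi k I a b) (phi k I c d) = phi k I (a + c) (b + d).
Proof.
  unfold phi. rewrite add_swap4, real_add, <- scal_add_l; auto.
Qed.

Lemma phi_scal r a b : cd_scal k r (phi k I a b) = phi k I (r * a) (r * b).
Proof. unfold phi. rewrite scal_add_r, scal_real, scal_scal; auto. Qed.

Lemma phi_opp a b : cd_opp k (phi k I a b) = phi k I (- a) (- b).
Proof. rewrite opp_scal, phi_scal; f_equal; lra. Qed.

Lemma phi_ext a b c d : a = c -> b = d -> phi k I a b = phi k I c d.
Proof. intros; subst; auto. Qed.

Lemma phi_mul a b c d : cd_mul k (phi k I a b) (phi k I c d) = phi k I (a * c - b * d) (a * d + b * c).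
Proof.
  assert (HIm : cd_mul k I (phi k I c d) = phi k I (- d) c).
  { unfold phi at 1. rewrite mul_add_r, mul_real_r, mul_scal_r, (iu_mul _ _ HI), scal_real.
    unfold phi. rewrite add_comm. f_equal. f_equal. lra. }
  unfold phi at 1. rewrite mul_add_l, mul_real_l, mul_scal_l, HIm, !phi_scal, phi_add.
  apply phi_ext; lra.
Qed.

Lemma phi_one : phi k I 1 0 = cd_real k 1.
Proof. unfold phi. rewrite scal_zero_l, add_zero_r; auto. Qed.

Lemma phi_zero : phi k I 0 0 = cd_zero k.
Proof. unfold phi. rewrite scal_zero_l, add_zero_r, real_zero; auto. Qed.

Lemma dt_phi_1 a b : dt k (phi k I a b) (cd_real k 1) = a.
Proof. unfold phi. rewrite dt_add_l, dt_scal_l, !dt_real_r, re_real, (iu_re _ _ HI); lra. Qed.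

Lemma dt_phi_I a b : dt k (phi k I a b) I = b.
Proof.
  unfold phi. rewrite dt_add_l, dt_scal_l, dt_sym, dt_real_r, (iu_re _ _ HI), <- sq_dt, (iu_sq _ _ HI); lra.
Qed.

Lemma sq_phi a b : sq k (phi k I a b) = a * a + b * b.
Proof.
  unfold phi. rewrite sq_add, sq_real, sq_scal, (iu_sq _ _ HI), dt_sym, dt_scal_l, dt_real_r,
    (iu_re _ _ HI). lra.
Qed.

Lemma phi_inj a b c d : phi k I a b = phi k I c d -> a = c /\ b = d.
Proof.
  intros H. split.
  - rewrite <- (dt_phi_1 a b), <- (dt_phi_1 c d), H; auto.
  - rewrite <- (dt_phi_I a b), <- (dt_phi_I c d), H; auto.
Qed.

Lemma pi_phi x : pi_I k I x = phi k I (dt k x (cd_real k 1)) (dt k x I).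
Proof. unfold pi_I, phi. rewrite !cd_dot_dt; auto. Qed.

Lemma bessel x : dt k x (cd_real k 1) * dt k x (cd_real k 1) + dt k x I * dt k x I <= sq k x.
Proof.
  set (p := dt k x (cd_real k 1)). set (q := dt k x I).
  assert (H := sq_nonneg k (cd_add k x (cd_opp k (phi k I p q)))).
  rewrite sq_add, sq_opp, sq_phi, dt_opp_r in H.
  unfold phi in H. rewrite dt_add_r, dt_scal_r, dt_real_r in H. assert (Hp : p = cd_re k x) by (unfold p; rewrite dt_real_r; ring). fold q in H. rewrite <- Hp in H. nra.
Qed.

End Phi.

End CDA.

From HB Require structures.
From mathcomp Require all_boot all_order all_algebra.
From mathcomp Require all_classical all_reals all_analysis.
From mathcomp Require Rstruct Rstruct_topology.
From mathcomp Require complex.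
From mathcomp Require ring lra.

Module MC.
Import structures.
Import all_boot all_order all_algebra.
Import all_classical all_reals all_analysis.
Import Rstruct Rstruct_topology.
Import complex.
Import ring lra.
Import Order.TTheory GRing.Theory Num.Theory.
Import numFieldNormedType.Exports.
Import CDA.
Import ComplexField.Normc.
Local Open Scope ring_scope.
Local Open Scope classical_set_scope.
Local Open Scope complex_scope.

Set Implicit Arguments.
Unset Strict Implicit.
Unset Printing Implicit Defensive.


Arguments iu_re {k I}. Arguments iu_sq {k I}. Arguments iu_conj {k I}. Arguments iu_mul {k I}.
Arguments phi_mul {k I} HI a b c d. Arguments dt_phi_1 {k I} HI a b. Arguments dt_phi_I {k I} HI a b.
Arguments sq_phi {k I} HI a b. Arguments phi_inj {k I} HI {a b c d}. Arguments bessel {k I} HI x.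
Arguments imag_iu {k I}. Arguments iu_imag {k I}.
Notation RE := (@complex.Re R).
Notation IM := (@complex.Im R).

Definition ph k (I : CD k) (w : R[i]) : CD k := phi k I (RE w) (IM w).
Definition cc k (I : CD k) (x : CD k) : R[i] := (dt k x (cd_real k 1)) +i* (dt k x I).

Section Bridge.
Variable k : nat.
Variable I : CD k.
Hypothesis HI : iu k I.

Lemma ph_add w v : cd_add k (ph I w) (ph I v) = ph I (w + v).
Proof. by case: w => a b; case: v => c d; rewrite /ph /= phi_add. Qed.

Lemma ph_mul w v : cd_mul k (ph I w) (ph I v) = ph I (w * v).
Proof. by case: w => a b; case: v => c d; rewrite /ph /= (phi_mul HI). Qed.

Lemma ph_scal r w : cd_scal k r (ph I w) = ph I (r%:C * w).
Proof.
case: w => a b; rewrite /ph /= phi_scal; apply: phi_ext => /=; rewrite ?RmultE ?RplusE; ring.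
Qed.

Lemma ph_one : ph I 1 = cd_real k 1.
Proof. by rewrite /ph /= phi_one. Qed.

Lemma ph_zero : ph I 0 = cd_zero k.
Proof. by rewrite /ph /= phi_zero. Qed.

Lemma ph_pow w m : cd_pow k (ph I w) m = ph I (w ^+ m).
Proof.
elim: m => [|m IH] /=; first by rewrite expr0 ph_one.
by rewrite IH ph_mul exprSr.
Qed.

Lemma ph_inj w v : ph I w = ph I v -> w = v.
Proof. case: w => a b; case: v => c d; rewrite /ph /= => /(phi_inj HI) [-> ->] //. Qed.

Lemma cc_ph w : cc I (ph I w) = w.
Proof. by case: w => a b; rewrite /cc /ph (dt_phi_1 HI) (dt_phi_I HI). Qed.

Lemma pi_cc x : pi_I k I x = ph I (cc I x).
Proof. by rewrite pi_phi. Qed.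

Lemma cc_one : cc I (cd_real k 1) = 1.
Proof.
rewrite /cc dt_real_r re_real dt_sym dt_real_r (iu_re HI).
by apply/eqP; rewrite eq_complex /= !RmultE mulr0 mulr1 !eqxx.
Qed.

Lemma sq_ph w : sq k (ph I w) = RE w ^+ 2 + IM w ^+ 2.
Proof. by case: w => a b; rewrite /ph (sq_phi HI) /= !expr2. Qed.

Lemma abs_ph w : cd_abs k (ph I w) = normc w.
Proof. by rewrite cd_abs_sq sq_ph RsqrtE; case: w. Qed.

Lemma normc_cc x : normc (cc I x) <= cd_abs k x.
Proof.
rewrite cd_abs_sq RsqrtE /cc /= ler_sqrt; last by apply/RleP; apply: sq_nonneg.
have := bessel HI x; rewrite !RmultE !RplusE => /RleP; by rewrite !expr2.
Qed.

Fixpoint evl (c : list (CD k)) (w : R[i]) (i : nat) : R[i] :=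
  match c with
  | nil => 0
  | x :: c' => cc I x * w ^+ i + evl c' w i.+1
  end.

Lemma eval_bridge c w i : eval_fI_from k I c (ph I w) i = ph I (evl c w i).
Proof.
elim: c i => [|x c IH] i /=; first by rewrite ph_zero.
by rewrite IH pi_cc ph_pow ph_mul ph_add.
Qed.

Lemma evl_app c1 c2 w i : evl (c1 ++ c2) w i = evl c1 w i + evl c2 w (i + length c1).
Proof.
elim: c1 i => [|x c IH] i /=; first by rewrite add0r addn0.
by rewrite IH addrA addnS.
Qed.

Lemma evl_map_seq (a : nat -> CD k) s m w i :
  evl (List.map a (List.seq s m)) w i = \sum_(j < m) cc I (a (s + j)%N) * w ^+ (i + j).
Proof.
elim: m s i => [|m IH] s i /=; first by rewrite big_ord0.
rewrite big_ord_recl IH /= addn0 addn0; congr (_ + _).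
by apply: eq_bigr => j _; rewrite /bump /= !addSn !addnS.
Qed.

End Bridge.

Arguments evl {k} I c w i.

Lemma normc_ge0 (w : R[i]) : 0 <= normc w.
Proof. by case: w => a b /=; apply: sqrtr_ge0. Qed.

Lemma normc_real (x : R) : normc (x%:C) = `|x|.
Proof. by rewrite /= expr0n /= addr0 sqrtr_sqr. Qed.

Lemma normcX (w : R[i]) m : normc (w ^+ m) = normc w ^+ m.
Proof.
elim: m => [|m IH]; first by rewrite !expr0 /= expr0n expr1n /= addr0 sqrtr1.
by rewrite !exprS normcM IH.
Qed.

Lemma normc_sum m (F : 'I_m -> R[i]) : normc (\sum_(j < m) F j) <= \sum_(j < m) normc (F j).
Proof.
elim: m F => [|m IH] F; first by rewrite !big_ord0 /= expr0n /= addr0 sqrtr0.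
rewrite !big_ord_recr /=; apply: le_trans (le_normcD _ _) _; rewrite lerD2r; exact: IH.
Qed.

Lemma normc_seqsum (T : Type) (s : seq T) (F : T -> R[i]) :
  normc (\sum_(q <- s) F q) <= \sum_(q <- s) normc (F q).
Proof.
elim: s => [|x s IH]; first by rewrite !big_nil /= expr0n /= addr0 sqrtr0.
rewrite !big_cons; apply: le_trans (le_normcD _ _) _; rewrite lerD2l; exact: IH.
Qed.

Lemma geo (r : R) m : (r - 1) * \sum_(j < m) r ^+ j = r ^+ m - 1.
Proof.
elim: m => [|m IH]; first by rewrite big_ord0 mulr0 expr0 subrr.
rewrite big_ord_recr /= mulrDr IH exprS; ring.
Qed.

Lemma cs_ineq m (x y : nat -> R) :
  (\sum_(j < m) x j * y j) ^+ 2 <= (\sum_(j < m) x j ^+ 2) * (\sum_(j < m) y j ^+ 2).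
Proof.
elim: m => [|m IH]; first by rewrite !big_ord0 expr0n /= mulr0.
rewrite !big_ord_recr /=.
set S := \sum_(i < m) _ in IH *; set X := \sum_(i < m) _ in IH *; set Y := \sum_(i < m) _ in IH *.
have X0 : 0 <= X by apply: sumr_ge0 => i _; apply: sqr_ge0.
have Y0 : 0 <= Y by apply: sumr_ge0 => i _; apply: sqr_ge0.
set u := x m; set v := y m.
have key : (2 * S * u * v) ^+ 2 <= (X * v ^+ 2 + u ^+ 2 * Y) ^+ 2.
  have h1 : 0 <= (X * v ^+ 2 - u ^+ 2 * Y) ^+ 2 by apply: sqr_ge0.
  have h2 : 0 <= u ^+ 2 * v ^+ 2 by apply: mulr_ge0; apply: sqr_ge0.
  have h3 : S ^+ 2 * (u ^+ 2 * v ^+ 2) <= X * Y * (u ^+ 2 * v ^+ 2) by apply: ler_wpM2r.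
  nra.
have b0 : 0 <= X * v ^+ 2 + u ^+ 2 * Y.
  by apply: addr_ge0; apply: mulr_ge0 => //; apply: sqr_ge0.
have key2 : 2 * S * u * v <= X * v ^+ 2 + u ^+ 2 * Y.
  case: (lerP (2 * S * u * v) 0) => h; first exact: le_trans h b0.
  by rewrite -(ler_pXn2r (n:=2)) // ?nnegrE ?ltW.
nra.
Qed.

Section RealBounds.
Variables (m : nat) (A : nat -> R) (r : R).
Hypotheses (m0 : (0 < m)%N) (A0 : forall j, 0 <= A j) (r0 : 0 <= r)
  (E : r ^+ m <= \sum_(j < m) A j * r ^+ j).

Lemma bound3 : r <= Num.max 1 (\sum_(j < m) A j).
Proof using m0 A0 r0 E.
rewrite leNgt; apply/negP; rewrite gt_max => /andP [r1 rS].
have q0 : 0 < r ^+ m.-1 by apply: exprn_gt0; apply: lt_trans r1.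
have H2 : \sum_(j < m) A j * r ^+ j <= \sum_(j < m) A j * r ^+ m.-1.
  apply: ler_sum => j _; apply: ler_wpM2l => //; apply: ler_weXn2l; first exact: ltW.
  by rewrite -ltnS prednK.
rewrite -big_distrl /= in H2.
have Hr : r ^+ m = r * r ^+ m.-1 by rewrite -exprS prednK.
set S := \sum_(j < m) A j in rS H2; set q := r ^+ m.-1 in q0 H2 Hr.
have E1 := E; rewrite Hr in E1. nra.
Qed.

Lemma bound2 : r < 1 + \big[Num.max/0]_(j < m) A j.
Proof using m0 A0 r0 E.
rewrite ltNge; apply/negP => H.
set M := \big[Num.max/0]_(j < m) A j in H.
have AM : forall j : 'I_m, A j <= M by move=> j; exact: (le_bigmax 0 (fun j : 'I_m => A j) j).
have H2 : \sum_(j < m) A j * r ^+ j <= M * \sum_(j < m) r ^+ j.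
  rewrite big_distrr /=; apply: ler_sum => j _; apply: ler_wpM2r => //; exact: exprn_ge0.
have G0 : 0 <= \sum_(j < m) r ^+ j by apply: sumr_ge0 => j _; apply: exprn_ge0.
have Hg := geo r m.
set G := \sum_(j < m) r ^+ j in H2 G0 Hg.
have h3 : M * G <= (r - 1) * G by apply: ler_wpM2r => //; lra.
have : r ^+ m <= r ^+ m - 1 by rewrite -Hg; apply: le_trans E _; apply: le_trans H2 h3.
lra.
Qed.

Lemma bound1 : r ^+ 2 < 1 + \sum_(j < m) A j ^+ 2.
Proof using m0 A0 r0 E.
rewrite ltNge; apply/negP => H.
have CS := cs_ineq m A (fun j => r ^+ j).
have Hg := geo (r ^+ 2) m.
have G0 : 0 <= \sum_(j < m) (r ^+ 2) ^+ j by apply: sumr_ge0 => j _; apply: exprn_ge0; apply: sqr_ge0.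
have e1 : \sum_(j < m) (r ^+ j) ^+ 2 = \sum_(j < m) (r ^+ 2) ^+ j.
  by apply: eq_bigr => j _; rewrite -!exprM mulnC.
rewrite e1 in CS.
set Q := \sum_(j < m) A j ^+ 2 in H CS.
set G := \sum_(j < m) (r ^+ 2) ^+ j in CS Hg G0.
have E1 := E.
set T := \sum_(j < m) A j * r ^+ j in CS E1.
have rm0 : 0 <= r ^+ m by apply: exprn_ge0.
have e2 : (r ^+ 2) ^+ m = (r ^+ m) ^+ 2 by rewrite -!exprM mulnC.
rewrite e2 in Hg.
have : Q * G <= (r ^+ 2 - 1) * G by apply: ler_wpM2r => //; lra.
set u := r ^+ m in rm0 E1 Hg e2.
nra.
Qed.

End RealBounds.

Lemma fold_sum (f : nat -> R) s m :
  fold_right Rplus 0%R (List.map f (List.seq s m)) = \sum_(j < m) f (s + j)%N.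
Proof.
elim: m s => [|m IH] s /=; first by rewrite big_ord0.
by rewrite big_ord_recl IH addn0 RplusE; congr (_ + _); apply: eq_bigr => j _; rewrite /bump /= addSn addnS.
Qed.

Lemma fold_max (f : nat -> R) s m :
  fold_right Rmax 0%R (List.map f (List.seq s m)) = \big[Num.max/0]_(j < m) f (s + j)%N.
Proof.
elim: m s => [|m IH] s /=; first by rewrite big_ord0.
by rewrite big_ord_recl IH addn0 RmaxE; congr (Num.max _ _); apply: eq_bigr => j _; rewrite /bump /= addSn addnS.
Qed.

Section Poly.
Variables (k n : nat) (a : nat -> CD k) (I : CD k).
Hypothesis HI : iu k I.
Hypothesis hn : (1 <= n)%N.

Definition gev (w : R[i]) : R[i] := \sum_(j < n) cc I (a j) * w ^+ j + w ^+ n.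

Lemma evl_monic w : evl I (monic_poly k n a) w 0 = gev w.
Proof.
rewrite /monic_poly evl_app (evl_map_seq I a 0 n w 0) length_map length_seq /= cc_one //.
by rewrite mul1r addr0.
Qed.

Lemma eval_monic w : eval_fI k I (monic_poly k n a) (ph I w) = ph I (gev w).
Proof. by rewrite /eval_fI eval_bridge // evl_monic. Qed.

Lemma root_iff z :
  (in_CI k I z /\ eval_fI k I (monic_poly k n a) z = cd_zero k) <->
  exists w, z = ph I w /\ gev w = 0.
Proof.
split.
- move=> [[al [be ->]] H]; exists (al +i* be); split => //.
  apply: (ph_inj HI); rewrite -eval_monic; by rewrite ph_zero.
- move=> [w [-> H]]; split.
  + by exists (RE w), (IM w).
  + by rewrite eval_monic H ph_zero.
Qed.

Lemma real1_neq0 : cd_real k 1 <> cd_zero k.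
Proof. rewrite -real_zero => /real_inj; apply/eqP; exact: oner_neq0. Qed.

Lemma nonconst : fI_nonconstant k I (monic_poly k n a).
Proof.
exists n; split; [by apply/ssrnat.leP | split].
- rewrite /monic_poly length_app length_map length_seq /=; apply/ssrnat.ltP; rewrite Nat.add_1_r; exact: ltnSn.
- rewrite /monic_poly app_nth2; last by rewrite length_map length_seq; apply/ssrnat.leP.
  rewrite length_map length_seq Nat.sub_diag /= pi_cc cc_one // ph_one //; exact: real1_neq0.
Qed.

Definition gp : {poly R[i]} := 'X^n + \poly_(j < n) cc I (a j).

Lemma gp_eval w : gp.[w] = gev w.
Proof. by rewrite /gp hornerD hornerXn horner_poly /gev addrC. Qed.

Lemma gp_size : size gp = n.+1.
Proof. by rewrite /gp size_polyDl size_polyXn // ltnS size_poly. Qed.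

Lemma roots_count (rs : seq R[i]) : uniq rs -> all (fun w => gev w == 0) rs -> (size rs <= n)%N.
Proof.
move=> U Hall; rewrite -ltnS -gp_size; apply: max_poly_roots => //.
  by rewrite -size_poly_eq0 gp_size.
by apply/allP => w /(allP Hall); rewrite /root gp_eval.
Qed.

Definition Aa (j : nat) : R := cd_abs k (a j).

Lemma Aa_ge0 j : 0 <= Aa j.
Proof. by rewrite /Aa cd_abs_sq RsqrtE sqrtr_ge0. Qed.

Lemma root_E w : gev w = 0 -> normc w ^+ n <= \sum_(j < n) Aa j * normc w ^+ j.
Proof.
move=> H; have E0 : w ^+ n = - \sum_(j < n) cc I (a j) * w ^+ j.
  by apply/eqP; rewrite -subr_eq0 opprK addrC; apply/eqP; exact: H.
rewrite -normcX E0 normcN.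
apply: le_trans (normc_sum _) _; apply: ler_sum => j _.
rewrite normcM normcX; apply: ler_wpM2r; first by apply: exprn_ge0; apply: normc_ge0.
exact: normc_cc.
Qed.

Lemma root_b3 w : gev w = 0 -> normc w <= radius3 k n a.
Proof.
move=> H; rewrite /radius3 RmaxE fold_sum.
under eq_bigr => j _ do rewrite add0n.
exact: (bound3 hn Aa_ge0 (normc_ge0 w) (root_E H)).
Qed.

Lemma root_b2 w : gev w = 0 -> normc w < radius2 k n a.
Proof.
move=> H; rewrite /radius2 fold_max RplusE.
under eq_bigr => j _ do rewrite add0n.
exact: (bound2 hn Aa_ge0 (normc_ge0 w) (root_E H)).
Qed.

Lemma root_b1 w : gev w = 0 -> normc w < radius1 k n a.
Proof.
move=> H; rewrite /radius1 fold_sum RsqrtE RplusE.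
have h := bound1 hn Aa_ge0 (normc_ge0 w) (root_E H).
have e : \sum_(j < n) pow (cd_abs k (a (0 + j)%N)) 2 = \sum_(j < n) Aa j ^+ 2.
  by apply: eq_bigr => j _; rewrite RpowE add0n.
rewrite e; have b0 : 0 < 1 + \sum_(j < n) Aa j ^+ 2 by apply: le_lt_trans h; apply: sqr_ge0.
by rewrite -(ger0_norm (normc_ge0 w)) -sqrtr_sqr ltr_sqrt.
Qed.

End Poly.

Definition cfold k (l : list (R * CD k)) : CD k :=
  fold_right (fun p acc => cd_add k (cd_scal k (fst p) (snd p)) acc) (cd_zero k) l.
Definition wsum k (l : list (R * CD k)) : R := fold_right Rplus 0%R (List.map fst l).

Section Hull.
Variables (k : nat) (I : CD k).
Hypothesis HI : iu k I.

Lemma fold_ph (l : list (R * CD k)) : Forall (fun q => exists w, snd q = ph I w) l ->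
  cfold l = ph I (\sum_(q <- l) (fst q)%:C * cc I (snd q)).
Proof.
elim: l => [|q l IH] H /=; first by rewrite big_nil ph_zero.
inversion H as [|q' l' [w Hw] Hl]; subst.
by rewrite IH // big_cons Hw cc_ph // ph_scal ph_add.
Qed.

Lemma hull_lt (B : R) (l : list (R * CD k)) :
  Forall (fun q => 0 <= fst q /\ normc (cc I (snd q)) < B) l ->
  normc (\sum_(q <- l) (fst q)%:C * cc I (snd q)) <= wsum l * B /\
  (0 < wsum l -> normc (\sum_(q <- l) (fst q)%:C * cc I (snd q)) < wsum l * B).
Proof.
elim: l => [|q l IH] H /=.
  rewrite big_nil /wsum /= mul0r /= expr0n /= addr0 sqrtr0; split => //; by rewrite ltxx.
inversion H as [|q' l' [q0 qB] Hl]; subst.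
have [IH1 IH2] := IH Hl.
rewrite big_cons /wsum /= -/(wsum l) RplusE.
set N := normc (\sum_(j <- l) _) in IH1 IH2 *.
have h1 : normc ((fst q)%:C * cc I (snd q) + \sum_(j <- l) (fst j)%:C * cc I (snd j)) <=
          fst q * normc (cc I (snd q)) + N.
  apply: le_trans (le_normcD _ _) _; rewrite normcM normc_real ger0_norm //.
set c := normc (cc I (snd q)) in qB h1 *.
have c0 : 0 <= c by apply: normc_ge0.
split.
  apply: le_trans h1 _; rewrite mulrDl; apply: lerD => //; apply: ler_wpM2l => //; exact: ltW.
move=> S0; apply: le_lt_trans h1 _.
case: (ltrP 0 (fst q)) => hq.
  rewrite mulrDl; apply: ltr_leD; [by rewrite ltr_pM2l | by []].
have -> : fst q = 0 by apply/eqP; rewrite eq_le hq q0.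
rewrite mul0r add0r mulrDl mul0r add0r; apply: IH2; move: S0; by rewrite (_ : fst q = 0) ?add0r //; apply/eqP; rewrite eq_le hq q0.
Qed.

Lemma hull_le (B : R) (l : list (R * CD k)) :
  Forall (fun q => 0 <= fst q /\ normc (cc I (snd q)) <= B) l ->
  normc (\sum_(q <- l) (fst q)%:C * cc I (snd q)) <= wsum l * B.
Proof.
elim: l => [|q l IH] H /=.
  by rewrite big_nil /wsum /= mul0r /= expr0n /= addr0 sqrtr0.
inversion H as [|q' l' [q0 qB] Hl]; subst.
rewrite big_cons /wsum /= -/(wsum l) RplusE.
apply: le_trans (le_normcD _ _) _; rewrite normcM normc_real ger0_norm // mulrDl.
apply: lerD; [exact: ler_wpM2l | exact: IH].
Qed.

End Hull.

Lemma snail_roots k n a x : (1 <= n)%N -> snail k (monic_poly k n a) x ->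
  exists I, iu k I /\ exists l : list (R * CD k),
    Forall (fun q => 0 <= fst q /\ exists w, snd q = ph I w /\ gev n a I w = 0) l /\
    wsum l = 1 /\ x = cfold l.
Proof.
move=> hn [I [HIu HK]]; have HI := imag_iu HIu.
exists I; split => //.
case: HK => [[_ [l [HF [HS Hx]]]] | [nn _]]; last by exfalso; apply: nn; exact: nonconst.
exists l; split; [|split => //].
apply: Forall_impl HF => q [q0 Hr]; split; first by apply/RleP.
by apply/(root_iff n a HI).
Qed.

Lemma snail_bounds k n a x : (1 <= n)%N -> snail k (monic_poly k n a) x ->
  [/\ cd_abs k x < radius1 k n a, cd_abs k x < radius2 k n a & cd_abs k x <= radius3 k n a].
Proof.
move=> hn /(snail_roots hn) [I [HI [l [HF [HS Hx]]]]].
have Hx' : x = ph I (\sum_(q <- l) (fst q)%:C * cc I (snd q)).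
  rewrite Hx; apply: fold_ph => //; apply: Forall_impl HF => q [_ [w [-> _]]]; by exists w.
rewrite Hx' abs_ph //.
have G : forall B : R, (forall w, gev n a I w = 0 -> normc w < B) ->
   normc (\sum_(q <- l) (fst q)%:C * cc I (snd q)) < B.
  move=> B HB.
  have hh : Forall (fun q => 0 <= fst q /\ normc (cc I (snd q)) < B) l.
    apply: Forall_impl HF => q [q0 [w [-> Hw]]]; split => //; rewrite cc_ph //; exact: HB.
  have [_ h] := hull_lt hh.
  by rewrite HS mul1r in h; apply: h; exact: ltr01.
split.
- apply: G => w Hw; exact: (root_b1 HI hn Hw).
- apply: G => w Hw; exact: (root_b2 HI hn Hw).
- have hh : Forall (fun q => 0 <= fst q /\ normc (cc I (snd q)) <= radius3 k n a) l.
    apply: Forall_impl HF => q [q0 [w [-> Hw]]]; split => //; rewrite cc_ph //; exact: (root_b3 HI hn Hw).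
  have h := hull_le hh.
  by rewrite HS mul1r in h.
Qed.


Unset Implicit Arguments.

Fixpoint dim (k : nat) : nat := match k with O => 1%N | S k' => (dim k' + dim k')%N end.

Fixpoint vec (k : nat) : CD k -> 'rV[R]_(dim k) :=
  match k return CD k -> 'rV[R]_(dim k) with
  | O => fun x => const_mx x
  | S k' => fun x => row_mx (vec k' (fst x)) (vec k' (snd x))
  end.

Fixpoint unvec (k : nat) : 'rV[R]_(dim k) -> CD k :=
  match k return 'rV[R]_(dim k) -> CD k with
  | O => fun v => v ord0 ord0
  | S k' => fun v => (unvec k' (lsubmx v), unvec k' (rsubmx v))
  end.

Set Implicit Arguments.
Unset Strict Implicit.
Unset Printing Implicit Defensive.

Lemma vecK k (x : CD k) : unvec k (vec k x) = x.
Proof.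
elim: k x => [|k IH] x /=; first by rewrite mxE.
by rewrite row_mxKl row_mxKr !IH; case: x.
Qed.

Lemma unvecK k (v : 'rV[R]_(dim k)) : vec k (unvec k v) = v.
Proof.
elim: k v => [|k IH] v /=; first by apply/matrixP => i j; rewrite !ord1 mxE.
by rewrite !IH hsubmxK.
Qed.

Lemma vec_add k (x y : CD k) : vec k (cd_add k x y) = vec k x + vec k y.
Proof.
elim: k x y => [|k IH] x y /=; first by apply/matrixP => i j; rewrite !mxE.
by rewrite !IH add_row_mx.
Qed.

Lemma vec_scal k r (x : CD k) : vec k (cd_scal k r x) = r *: vec k x.
Proof.
elim: k x => [|k IH] x /=; first by apply/matrixP => i j; rewrite !mxE.
by rewrite !IH scale_row_mx.
Qed.

Lemma vec_opp k (x : CD k) : vec k (cd_opp k x) = - vec k x.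
Proof. by rewrite opp_scal vec_scal scaleN1r. Qed.

Lemma dt_vec k (x y : CD k) : dt k x y = \sum_(i < dim k) vec k x ord0 i * vec k y ord0 i.
Proof.
elim: k x y => [|k IH] x y /=; first by rewrite big_ord1 !mxE.
rewrite big_split_ord /= !IH RplusE; congr (_ + _); apply: eq_bigr => i _;
  by rewrite ?row_mxEl ?row_mxEr.
Qed.

Lemma sq_vec k (x : CD k) : sq k x = \sum_(i < dim k) vec k x ord0 i ^+ 2.
Proof. by rewrite sq_dt dt_vec; apply: eq_bigr => i _; rewrite expr2. Qed.

Section Cont.
Variable (T : topologicalType).

Inductive ct (f : T -> R) : Prop := CT of continuous f.

Lemma ct_cst c : ct (fun _ => c).
Proof. constructor; exact: cst_continuous. Qed.

Lemma ctD f g : ct f -> ct g -> ct (fun p => f p + g p).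
Proof. move=> [hf] [hg]; constructor => x; apply: (@continuousD R R^o); [exact: hf | exact: hg]. Qed.

Lemma ctM f g : ct f -> ct g -> ct (fun p => f p * g p).
Proof. move=> [hf] [hg]; constructor => x; apply: (@continuousM R T); [exact: hf | exact: hg]. Qed.

Lemma ctN f : ct f -> ct (fun p => - f p).
Proof. move=> [hf]; constructor => x; apply: (@continuousN R R^o); exact: hf. Qed.

Lemma ctB f g : ct f -> ct g -> ct (fun p => f p - g p).
Proof. by move=> hf hg; apply: ctD => //; apply: ctN. Qed.

Lemma ct_ext f g : ct f -> (forall p, f p = g p) -> ct g.
Proof. by move=> h e; rewrite -(funext e). Qed.

Lemma ct_sum m (F : 'I_m -> T -> R) : (forall j, ct (F j)) -> ct (fun p => \sum_(j < m) F j p).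
Proof.
elim: m F => [|m IH] F hF.
  by refine (ct_ext (ct_cst 0) _); move=> p; rewrite big_ord0.
have h := IH (fun j => F (widen_ord (leqnSn m) j)) (fun j => hF _).
by refine (ct_ext (ctD h (hF ord_max)) _); move=> p; rewrite big_ord_recr.
Qed.

Lemma ctX f m : ct f -> ct (fun p => f p ^+ m).
Proof.
move=> hf; elim: m => [|m IH]; first by refine (ct_ext (ct_cst 1) _); move=> p; rewrite expr0.
by refine (ct_ext (ctM IH hf) _); move=> p; rewrite exprSr.
Qed.

Definition cct (f : T -> R[i]) := ct (fun p => RE (f p)) /\ ct (fun p => IM (f p)).

Lemma cct_mk f g : ct f -> ct g -> cct (fun p => f p +i* g p).
Proof. by move=> hf hg; split. Qed.

Lemma cct_cst c : cct (fun _ => c).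
Proof. split; exact: ct_cst. Qed.

Lemma cct_ext f g : cct f -> (forall p, f p = g p) -> cct g.
Proof. by move=> h e; rewrite -(funext e). Qed.

Lemma cctD f g : cct f -> cct g -> cct (fun p => f p + g p).
Proof.
move=> [h1 h2] [h3 h4]; split.
- by refine (ct_ext (ctD h1 h3) _); move=> p; case: (f p); case: (g p).
- by refine (ct_ext (ctD h2 h4) _); move=> p; case: (f p); case: (g p).
Qed.

Lemma cctM f g : cct f -> cct g -> cct (fun p => f p * g p).
Proof.
move=> [h1 h2] [h3 h4]; split.
- by refine (ct_ext (ctB (ctM h1 h3) (ctM h2 h4)) _); move=> p; case: (f p); case: (g p).
- by refine (ct_ext (ctD (ctM h1 h4) (ctM h2 h3)) _); move=> p; case: (f p); case: (g p).
Qed.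

Lemma cct_sum m (F : 'I_m -> T -> R[i]) : (forall j, cct (F j)) -> cct (fun p => \sum_(j < m) F j p).
Proof.
elim: m F => [|m IH] F hF.
  by refine (cct_ext (cct_cst 0) _); move=> p; rewrite big_ord0.
have h := IH (fun j => F (widen_ord (leqnSn m) j)) (fun j => hF _).
by refine (cct_ext (cctD h (hF ord_max)) _); move=> p; rewrite big_ord_recr.
Qed.

Lemma cctX f m : cct f -> cct (fun p => f p ^+ m).
Proof.
move=> hf; elim: m => [|m IH]; first by refine (cct_ext (cct_cst 1) _); move=> p; rewrite expr0.
by refine (cct_ext (cctM IH hf) _); move=> p; rewrite exprSr.
Qed.

Lemma closed_eqf f c : ct f -> closed [set p | f p = c].
Proof. move=> [hf]; have h := (continuous_closedP f).1 hf _ (@closed_eq R c); exact h. Qed.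

Lemma closed_gef f c : ct f -> closed [set p | c <= f p].
Proof. move=> [hf]; have h := (continuous_closedP f).1 hf _ (@closed_ge R c); exact h. Qed.

End Cont.

Lemma listmapE (A B : Type) (f : A -> B) (s : seq A) : List.map f s = map f s.
Proof. by elim: s => //= x s ->. Qed.

Lemma fold_seq (A : Type) (f : A -> R) (s : seq A) :
  fold_right Rplus 0%R (List.map f s) = \sum_(x <- s) f x.
Proof. by elim: s => [|x s IH] /=; rewrite ?big_nil ?big_cons ?IH. Qed.

Lemma I_setT (T : Type) (j : T) : [set: T] j. Proof. by []. Qed.

Lemma Forall_key (X : Type) (K : eqType) (key : X -> K) (l : seq X) :
  Forall (fun q => key q \in map key l) l.
Proof.
elim: l => [|q l IH] //=; constructor; first by rewrite in_cons eqxx.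
by apply: Forall_impl IH => q' h; rewrite in_cons h orbT.
Qed.

Lemma Forall_mem (X : Type) (K : eqType) (key : X -> K) (P : K -> Prop) (l : seq X) :
  Forall (fun q => P (key q)) l -> forall c, c \in map key l -> P c.
Proof.
elim: l => [|q l IH] H c //=; inversion H; subst.
by rewrite in_cons => /orP [/eqP -> // | /IH]; apply.
Qed.

Lemma pick_one (V : zmodType) (K : eqType) (rs : seq K) (k0 c : K) (G : K -> V) :
  uniq rs -> c \in rs ->
  \sum_(0 <= j < size rs) (if c == nth k0 rs j then G (nth k0 rs j) else 0) = G c.
Proof.
move=> U cin.
have ci : index c rs \in iota 0 (size rs) by rewrite mem_iota add0n index_mem.
rewrite /index_iota subn0 (bigD1_seq (index c rs)) ?iota_uniq //= nth_index // eqxx.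
rewrite big1_seq ?addr0 // => j /andP [hj jin].
case: eqP => // e; rewrite mem_iota add0n in jin.
by move: hj; rewrite e index_uniq // eqxx.
Qed.

Lemma regroup (V : zmodType) (X : Type) (K : eqType) (key : X -> K) (F : X -> K -> V)
  (rs : seq K) (k0 : K) (l : seq X) : uniq rs -> Forall (fun q => key q \in rs) l ->
  \sum_(0 <= j < size rs) \sum_(q <- l | key q == nth k0 rs j) F q (nth k0 rs j) =
  \sum_(q <- l) F q (key q).
Proof.
move=> U; elim: l => [|q l IH] H.
  by rewrite big_nil; apply: big1 => j _; rewrite big_nil.
inversion H as [|q' l' hq Hl]; subst.
rewrite big_cons -(IH Hl) -(pick_one k0 (fun c => F q c) U hq) -big_split /=.
by apply: eq_bigr => j _; rewrite big_cons; case: ifP => _; rewrite ?add0r.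
Qed.

Lemma sum_filter_ge0 (X : Type) (l : seq X) (c : pred X) (f : X -> R) :
  Forall (fun q => 0 <= f q) l -> 0 <= \sum_(q <- l | c q) f q.
Proof.
elim: l => [|q l IH] H; first by rewrite big_nil.
inversion H; subst; rewrite big_cons; case: (c q); last exact: IH.
by apply: addr_ge0 => //; exact: IH.
Qed.

Lemma sum_filter_le (X : Type) (l : seq X) (c : pred X) (f : X -> R) :
  Forall (fun q => 0 <= f q) l -> \sum_(q <- l | c q) f q <= \sum_(q <- l) f q.
Proof.
elim: l => [|q l IH] H; first by rewrite !big_nil.
inversion H; subst; rewrite !big_cons; case: (c q); first by rewrite lerD2l; exact: IH.
by apply: le_trans (IH _) _ => //; rewrite lerDr.
Qed.

Lemma sum_trunc (V : zmodType) (n m : nat) (G : nat -> V) : (m <= n)%N ->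
  (forall j, (m <= j)%N -> G j = 0) -> \sum_(j < n) G j = \sum_(0 <= j < m) G j.
Proof.
move=> mn HG; rewrite -(big_mkord xpredT G) (@big_cat_nat _ _ _ m 0 n) //=.
by rewrite [X in _ + X]big_nat_cond [X in _ + X]big1 ?addr0 // => j /andP [/andP [h _] _]; apply: HG.
Qed.

Lemma row_mx_all (Q : R -> Prop) m1 m2 (A : 'rV[R]_m1) (B : 'rV[R]_m2) :
  (forall i, Q (A ord0 i)) -> (forall i, Q (B ord0 i)) -> forall i, Q (row_mx A B ord0 i).
Proof.
move=> hA hB i; rewrite -(fintype.splitK i); case: (fintype.split i) => j /=.
- by rewrite row_mxEl.
- by rewrite row_mxEr.
Qed.

Section Param.
Variables (k n : nat) (a : nat -> CD k).
Hypothesis hn : (1 <= n)%N.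

Local Notation P := 'rV[R]_(dim k + (n + (n + n))).

Definition pv (p : P) : 'rV[R]_(dim k) := lsubmx p.
Definition pm (p : P) (j : 'I_n) : R := p ord0 (rshift (dim k) (lshift (n + n) j)).
Definition pa (p : P) (j : 'I_n) : R := p ord0 (rshift (dim k) (rshift n (lshift n j))).
Definition pb (p : P) (j : 'I_n) : R := p ord0 (rshift (dim k) (rshift n (rshift n j))).
Definition pI (p : P) : CD k := unvec k (pv p).
Definition pw (p : P) (j : 'I_n) : R[i] := pa p j +i* pb p j.
Definition pW (p : P) : R[i] := \sum_(j < n) (pm p j)%:C * pw p j.
Definition Phi (p : P) : CD k := ph (pI p) (pW p).

Definition box : set P := [set p | forall i, `[- radius3 k n a, radius3 k n a]%classic (p ord0 i)].

Definition Cset : set P :=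
  [set p | dt k (pI p) (cd_real k 1) = 0] `&` [set p | sq k (pI p) = 1] `&`
  (\bigcap_(j in [set: 'I_n]) [set p | 0 <= pm p j]) `&` [set p | \sum_(j < n) pm p j = 1] `&`
  (\bigcap_(j in [set: 'I_n]) [set p | RE (gev n a (pI p) (pw p j)) = 0]) `&`
  (\bigcap_(j in [set: 'I_n]) [set p | IM (gev n a (pI p) (pw p j)) = 0]).

Definition Tset : set P := box `&` Cset.

Lemma ct_coord i : ct (fun p : P => p ord0 i).
Proof. constructor; exact: coord_continuous. Qed.

Lemma dtI_E x (p : P) : dt k x (pI p) = \sum_(i < dim k) vec k x ord0 i * p ord0 (lshift _ i).
Proof. by rewrite dt_vec /pI /pv unvecK; apply: eq_bigr => i _; rewrite mxE. Qed.

Lemma ct_dtI x : ct (fun p : P => dt k x (pI p)).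
Proof.
refine (ct_ext (ct_sum (fun i => ctM (ct_cst _ (vec k x ord0 i)) (ct_coord _))) _) => p.
by rewrite dtI_E.
Qed.

Lemma sqI_E (p : P) : sq k (pI p) = \sum_(i < dim k) p ord0 (lshift _ i) ^+ 2.
Proof. by rewrite sq_vec /pI /pv unvecK; apply: eq_bigr => i _; rewrite mxE. Qed.

Lemma ct_sqI : ct (fun p : P => sq k (pI p)).
Proof.
refine (ct_ext (ct_sum (fun i => ctX 2 (ct_coord _))) _) => p.
by rewrite sqI_E.
Qed.

Lemma ct_dt1 : ct (fun p : P => dt k (pI p) (cd_real k 1)).
Proof. by refine (ct_ext (ct_dtI (cd_real k 1)) _) => p; rewrite dt_sym. Qed.

Lemma cct_cc x : cct (fun p : P => cc (pI p) x).
Proof. exact: (cct_mk (ct_cst _ _) (ct_dtI x)). Qed.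

Lemma cct_pw j : cct (fun p : P => pw p j).
Proof. exact: (cct_mk (ct_coord _) (ct_coord _)). Qed.

Lemma cct_gev j : cct (fun p : P => gev n a (pI p) (pw p j)).
Proof.
exact: (cctD (cct_sum (fun l => cctM (cct_cc (a l)) (cctX l (cct_pw j)))) (cctX n (cct_pw j))).
Qed.

Lemma cct_pW : cct pW.
Proof.
exact: (cct_sum (fun j => cctM (cct_mk (ct_coord (rshift (dim k) (lshift (n + n) j))) (ct_cst _ 0)) (cct_pw j))).
Qed.

Lemma Cset_closed : closed Cset.
Proof.
apply: closedI; [apply: closedI; [apply: closedI; [apply: closedI; [apply: closedI|]|]|]|].
- apply: closed_eqf; exact: ct_dt1.
- apply: closed_eqf; exact: ct_sqI.
- apply: closed_bigI => j _; apply: closed_gef; exact: ct_coord.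
- apply: closed_eqf; exact: (ct_sum (fun j => ct_coord _)).
- apply: closed_bigI => j _; apply: closed_eqf; exact: (cct_gev j).1.
- apply: closed_bigI => j _; apply: closed_eqf; exact: (cct_gev j).2.
Qed.

Lemma box_compact : compact box.
Proof.
have h := @rV_compact R (dim k + (n + (n + n))) (fun _ => `[- radius3 k n a, radius3 k n a]%classic) (fun _ => @segment_compact R (- radius3 k n a) (radius3 k n a)).
exact h.
Qed.

Lemma Tset_compact : compact Tset.
Proof. exact: (compact_closedI box_compact Cset_closed). Qed.


Lemma Phi_snail p : Tset p -> snail k (monic_poly k n a) (Phi p).
Proof.
move=> [_ [[[[[c1 c2] c3] c4] c5] c6]].
move: c1 c2 c3 c4 c5 c6 => /= c1 c2 c3 c4 c5 c6.
set I := pI p in c1 c2 c5 c6 *.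
have hre : cd_re k I = 0 by move: c1; rewrite dt_real_r RmultE mul1r.
have HIu : imag_unit k I.
  split; first by rewrite cd_tr_real hre RmultE mulr0 real_zero.
  by rewrite cd_n_real c2.
have HI := imag_iu HIu.
have groot : forall j, gev n a I (pw p j) = 0.
  move=> j; apply/eqP; rewrite eq_complex /=; apply/andP; split; apply/eqP.
  - exact: (c5 j Logic.I).
  - exact: (c6 j Logic.I).
exists I; split => //; left; split; first exact: nonconst.
exists (List.map (fun j => (pm p j, ph I (pw p j))) (index_enum 'I_n)); split; [|split].
- apply/Forall_forall => q /in_map_iff [j [<- _]] /=; split.
    apply/RleP; exact: (c3 j Logic.I).
  apply/(root_iff n a HI); exists (pw p j); split => //.
- rewrite map_map fold_seq /=; exact: c4.
- change (Phi p = cfold (List.map (fun j => (pm p j, ph I (pw p j))) (index_enum 'I_n))).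
  rewrite (fold_ph HI); last first.
    by apply/Forall_forall => q /in_map_iff [j [<- _]] /=; exists (pw p j).
  rewrite /Phi /pW -/I listmapE big_map; congr (ph I _); apply: eq_bigr => j _ /=.
  by rewrite cc_ph.
Qed.

Lemma in_int (M x : R) : - M <= x -> x <= M -> `[- M, M]%classic x.
Proof. by move=> h1 h2; rewrite /= in_itv /= h1 h2. Qed.

Lemma radius3_ge1 : 1 <= radius3 k n a.
Proof. by rewrite /radius3 RmaxE le_max lexx. Qed.

Lemma RE_le (w : R[i]) : - normc w <= RE w /\ RE w <= normc w.
Proof.
case: w => x y /=; set N := Num.sqrt _.
have N0 : 0 <= N by apply: sqrtr_ge0.
have h : N ^+ 2 = x ^+ 2 + y ^+ 2 by rewrite sqr_sqrtr // addr_ge0 // sqr_ge0.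
have hy := sqr_ge0 y.
split; nra.
Qed.

Lemma IM_le (w : R[i]) : - normc w <= IM w /\ IM w <= normc w.
Proof.
case: w => x y /=; set N := Num.sqrt _.
have N0 : 0 <= N by apply: sqrtr_ge0.
have h : N ^+ 2 = x ^+ 2 + y ^+ 2 by rewrite sqr_sqrtr // addr_ge0 // sqr_ge0.
have hy := sqr_ge0 x.
split; nra.
Qed.

Lemma snail_T x : snail k (monic_poly k n a) x -> exists p, Tset p /\ Phi p = x.
Proof.
move=> /(snail_roots hn) [I [HI [l [HF [HS Hx]]]]].
pose key := fun q : R * CD k => cc I q.2.
have Hkey : Forall (fun q => gev n a I (key q) = 0) l.
  by apply: Forall_impl HF => q [_ [w [e Hw]]]; rewrite /key e cc_ph.
have Hpos : Forall (fun q : R * CD k => 0 <= q.1) l by apply: Forall_impl HF => q [].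
have Hfold : x = ph I (\sum_(q <- l) (q.1)%:C * key q).
  rewrite Hx (fold_ph HI) //; apply: Forall_impl HF => q [_ [w [-> _]]]; by exists w.
have Hw1 : \sum_(q <- l) q.1 = 1 by rewrite -fold_seq.
pose rs := undup (map key l).
have Urs : uniq rs := undup_uniq _.
have Hrs : forall c, c \in rs -> gev n a I c = 0.
  move=> c; rewrite mem_undup; exact: (@Forall_mem _ _ key (fun c => gev n a I c = 0) l Hkey c).
have Hin : Forall (fun q => key q \in rs) l.
  by apply: Forall_impl (Forall_key key l) => q; rewrite mem_undup.
have szn : (size rs <= n)%N.
  apply: (@roots_count k n a I) => //; apply/allP => c /Hrs h /=; by rewrite h eqxx.
have rs0 : (0 < size rs)%N.
  have hq : exists q, key q \in rs.
    move: Hin Hw1; case: (l) => [|q l'] Hin' Hw1'; first by move: Hw1'; rewrite big_nil => /eqP; rewrite eq_sym oner_eq0.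
    by inversion Hin'; exists q.
  case: hq => q hq.
  by rewrite lt0n size_eq0; apply/eqP => e; move: hq; rewrite e in_nil.
pose r0 := nth 0 rs 0.
have Hr0 : gev n a I r0 = 0 by apply: Hrs; rewrite mem_nth.
pose wn := fun j : nat => nth r0 rs j.
have Hwn : forall j, gev n a I (wn j) = 0.
  move=> j; rewrite /wn; case: (ltnP j (size rs)) => hj; first by apply: Hrs; exact: mem_nth.
  by rewrite nth_default.
pose mn := fun j : nat => if (j < size rs)%N then \sum_(q <- l | key q == wn j) q.1 else 0.
have Hmn0 : forall j, 0 <= mn j.
  by move=> j; rewrite /mn; case: ifP => _ //; apply: sum_filter_ge0.
have Hmn1 : forall j, mn j <= 1.
  move=> j; rewrite /mn; case: ifP => _; last exact: ler01.
  by rewrite -Hw1; apply: sum_filter_le.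
have Hsum : \sum_(j < n) mn j = 1.
  rewrite (@sum_trunc _ n (size rs) mn szn) => [|j hj]; last by rewrite /mn ltnNge hj.
  rewrite -Hw1 -(regroup (fun q _ => q.1) r0 Urs Hin).
  by apply: eq_big_nat => j /andP [_ hj]; rewrite /mn hj.
have HW : \sum_(j < n) (mn j)%:C * wn j = \sum_(q <- l) (q.1)%:C * key q.
  rewrite (@sum_trunc _ n (size rs) (fun j => (mn j)%:C * wn j) szn) => [|j hj]; last by rewrite /mn ltnNge hj rmorph0 mul0r.
  rewrite -(regroup (fun q c => (q.1)%:C * c) r0 Urs Hin).
  apply: eq_big_nat => j /andP [_ hj]; rewrite /mn hj rmorph_sum big_distrl /=.
  by apply: eq_bigr => q _.
pose p : 'rV[R]_(dim k + (n + (n + n))) :=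
  row_mx (vec k I) (row_mx (\row_(j < n) mn j) (row_mx (\row_(j < n) RE (wn j)) (\row_(j < n) IM (wn j)))).
have pIp : pI p = I by rewrite /pI /pv row_mxKl vecK.
have pmp : forall j, pm p j = mn j by move=> j; rewrite /pm /p row_mxEr row_mxEl mxE.
have pwp : forall j, pw p j = wn j.
  by move=> j; rewrite /pw /pa /pb /p !row_mxEr row_mxEl !mxE; case: (wn j).
have M1 := radius3_ge1.
exists p; split; last by rewrite /Phi /pW pIp; under eq_bigr do rewrite pmp pwp; rewrite HW Hfold.
split.
  apply: row_mx_all; [|apply: row_mx_all; [|apply: row_mx_all]] => i.
  - have h : vec k I ord0 i ^+ 2 <= 1.
      suff : vec k I ord0 i ^+ 2 <= sq k I by rewrite (iu_sq HI).
      rewrite sq_vec (bigD1 i) //= lerDl; apply: sumr_ge0 => j _; exact: sqr_ge0.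
    apply: in_int; nra.
  - rewrite mxE; apply: in_int; have := Hmn0 i; have := Hmn1 i; lra.
  - rewrite mxE; have [h1 h2] := RE_le (wn i); have h3 := root_b3 HI hn (Hwn i).
    apply: in_int; lra.
  - rewrite mxE; have [h1 h2] := IM_le (wn i); have h3 := root_b3 HI hn (Hwn i).
    apply: in_int; lra.
split; [split; [split; [split; [split|]|]|]|] => /=.
- by rewrite pIp dt_real_r (iu_re HI) RmultE mulr0.
- by rewrite pIp (iu_sq HI).
- by move=> j _ /=; rewrite pmp.
- by under eq_bigr do rewrite pmp; exact: Hsum.
- by move=> j _ /=; rewrite pIp pwp Hwn.
- by move=> j _ /=; rewrite pIp pwp Hwn.
Qed.

Lemma vecPhi q i : vec k (Phi q) ord0 i =
  RE (pW q) * vec k (cd_real k 1) ord0 i + IM (pW q) * q ord0 (lshift _ i).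
Proof.
rewrite /Phi /ph /phi vec_add vec_scal /pI /pv unvecK.
have -> : cd_real k (RE (pW q)) = cd_scal k (RE (pW q)) (cd_real k 1).
  by rewrite scal_real RmultE mulr1.
by rewrite vec_scal !mxE.
Qed.

Lemma Phi_open (U : CD k -> Prop) : cd_open k U -> open [set p : P | U (Phi p)].
Proof.
move=> Uo; rewrite openE => p Up.
have [e [e0 He]] := Uo _ Up.
pose G := fun p' : P => \sum_(i < dim k) (vec k (Phi p') ord0 i - vec k (Phi p) ord0 i) ^+ 2.
have Gsq : forall p', sq k (cd_sub k (Phi p') (Phi p)) = G p'.
  move=> p'; rewrite /cd_sub sq_vec vec_add vec_opp; apply: eq_bigr => i _; by rewrite !mxE.
have ctG : ct G.
  refine (ct_ext (ct_sum (fun i => ctX 2 (ctB (ctD (ctM cct_pW.1 (ct_cst _ (vec k (cd_real k 1) ord0 i)))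
                                                   (ctM cct_pW.2 (ct_coord (lshift _ i))))
                                             (ct_cst _ (vec k (Phi p) ord0 i))))) _) => p'.
  by rewrite /G; apply: eq_bigr => i _; rewrite (vecPhi p').
have G0 : G p = 0 by rewrite /G big1 // => i _; rewrite subrr expr0n.
case: ctG => hG.
have e0' : 0 < e by apply/RltP.
have hG0 : G p < e ^+ 2 by rewrite G0; exact: exprn_gt0.
have hnear := @cvgr_lt R _ _ (nbhs_filter p) G (G p) (hG p) (e ^+ 2) hG0.
apply: filterS hnear => p' /= hp'.
apply: He; rewrite cd_abs_sq Gsq RsqrtE; apply/RltP.
rewrite -(ger0_norm (ltW e0')) -sqrtr_sqr ltr_sqrt //; exact: exprn_gt0.
Qed.

Lemma In_mem (T : eqType) (x : T) (s : seq T) : x \in s -> In x s.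
Proof. elim: s => //= y s IH; rewrite in_cons => /orP [/eqP ->|/IH]; by [left|right]. Qed.

Lemma snail_compact : cd_compact k (snail k (monic_poly k n a)).
Proof.
move=> J U Uo Ucov.
case: (pselect (exists x, snail k (monic_poly k n a) x)) => [[x0 Hx0]|none]; last first.
  by exists nil => x Hx; exfalso; apply: none; exists x.
have [j0 _] := Ucov x0 Hx0.
have hsel : forall q : P, exists j, Tset q -> U j (Phi q).
  move=> q; case: (pselect (Tset q)) => hq; last by exists j0.
  have [j hj] := Ucov _ (Phi_snail hq); by exists j.
pose jsel q := projT1 (cid (hsel q)).
have Hjsel : forall q, Tset q -> U (jsel q) (Phi q) := fun q => projT2 (cid (hsel q)).
have cT := Tset_compact; rewrite compact_cover in cT.
have [D' sD' cov] := cT P Tset (fun q => [set p | U (jsel q) (Phi p)]) (fun q _ => Phi_open (Uo _))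
  (fun p Tp => ex_intro2 _ _ p Tp (Hjsel p Tp)).
exists (List.map jsel (finmap.enum_fset D')) => x Hx.
have [p [Tp <-]] := snail_T Hx.
have [q qD' fq] := cov p Tp.
exists (jsel q); split => //.
by apply: in_map; apply: In_mem.
Qed.

End Param.

Lemma main_all k n (a : nat -> CD k) : Peano.le 1 n ->
  cd_compact k (snail k (monic_poly k n a)) /\
  (forall x, snail k (monic_poly k n a) x -> Rlt (cd_abs k x) (radius1 k n a)) /\
  (forall x, snail k (monic_poly k n a) x -> Rlt (cd_abs k x) (radius2 k n a)) /\
  (forall x, snail k (monic_poly k n a) x -> Rle (cd_abs k x) (radius3 k n a)).
Proof.
move=> /ssrnat.leP hn; split; first exact: snail_compact.
split; [|split] => x Hx; have [h1 h2 h3] := snail_bounds hn Hx.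
- exact/RltP.
- exact/RltP.
- exact/RleP.
Qed.

End MC.

Theorem theorem4p10 (k n : nat) (a : nat -> CD k) :
  (1 <= n)%nat ->
  cd_compact k (snail k (monic_poly k n a)) /\
  (forall x, snail k (monic_poly k n a) x -> cd_abs k x < radius1 k n a) /\
  (forall x, snail k (monic_poly k n a) x -> cd_abs k x < radius2 k n a) /\
  (forall x, snail k (monic_poly k n a) x -> cd_abs k x <= radius3 k n a).
Proof.
  intros Hn. exact (@MC.main_all k n a Hn).
Qed.
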